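(* Let $z>0$, $\zeta=(z/2)^{1/3}$. Let $(\sigma_n)_{n\in\mathbb Z}$ be functions of $z$ satisfying, for all $n\in\mathbb Z$, $$\sigma_{n+1}\sigma_{n-1}=\sqrt3\Big(z\big((\sigma_n')^2-\sigma_n\sigma_n''\big)-\sigma_n\sigma_n'\Big)\qquad(\,'=\mathrm d/\mathrm dz),$$ with $\sigma_0=\zeta^{-5/24}e^{-\frac98\zeta^4}$ and $\sigma_1=3^{1/4}\zeta^{7/24}e^{-\frac98\zeta^4-\frac32\zeta^2}$. Then for all $n\in\mathbb Z$, $$\sigma_n=\begin{cases}3^{1/4}\zeta^{7/24}e^{-\frac98\zeta^4-\frac32n\zeta^2}\rho_n(3\zeta^2),& n\text{ odd},\\ \zeta^{-5/24}e^{-\frac98\zeta^4-\frac32n\zeta^2}\rho_n(3\zeta^2),& n\text{ even},\end{cases}$$ where $\rho_n$ are the Ohyama polynomials.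
   Context: The Ohyama polynomials $\rho_n(s)$, $n\in\mathbb Z$, are defined by $\rho_0=\rho_1=\rho_{-1}=1$ and the recurrence $$(s+n)\rho_n^2-2s\rho_n\ddot\rho_n+2s(\dot\rho_n)^2-2\rho_n\dot\rho_n=\begin{cases}\rho_{n+1}\rho_{n-1},& n\text{ odd},\\ s\,\rho_{n+1}\rho_{n-1},& n\text{ even},\end{cases}$$ where dots denote $\mathrm d/\mathrm ds$ (it is known that each $\rho_n$ is a monic polynomial in $s$ with integer coefficients and $\rho_n(0)\ne0$). *)

(* Defs.v *)
From HB Require Import structures.
From mathcomp Require Import all_boot all_order all_algebra.
From mathcomp Require Import all_classical all_reals all_analysis.
Set Implicit Arguments. Unset Strict Implicit. Unset Printing Implicit Defensive.
Import Order.TTheory GRing.Theory Num.Theory.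
Local Open Scope ring_scope.

Definition int_odd (n : int) : bool := odd `|n|%N.

Definition ohyama_lhs {R : fieldType} (n : int) (p : {poly R}) : {poly R} :=
  ('X + (n%:~R)%:P) * p ^+ 2 - 2%:R%:P * 'X * p * p^`(2)
  + 2%:R%:P * 'X * (p^`()) ^+ 2 - 2%:R%:P * p * p^`().

Definition is_ohyama {R : fieldType} (rho : int -> {poly R}) : Prop :=
  [/\ rho 0 = 1, rho 1 = 1, rho (-1) = 1 &
   forall n : int,
     ohyama_lhs n (rho n) =
       if int_odd n then rho (n + 1) * rho (n - 1)
       else 'X * (rho (n + 1) * rho (n - 1))].

(* Main.v *)
Require Import Defs.
From HB Require Import structures.
From mathcomp Require Import all_boot all_order all_algebra.
From mathcomp Require Import all_classical all_reals all_analysis.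
From mathcomp Require Import ring lra zify.
Import Order.TTheory GRing.Theory Num.Theory.
Import numFieldNormedType.Exports.
Local Open Scope ring_scope.
Section S.
Variable R : realType.
Implicit Types (t y : R).

Lemma is_derive_ext (f g : R -> R) (x df dg : R) : (forall y, f y = g y) -> df = dg -> is_derive x 1 f df -> is_derive x 1 g dg.
Proof. by move=> /funext -> ->. Qed.

Lemma size_deriv_le (p : {poly R}) : (size p^`() <= (size p).-1)%N.
Proof.
have [->|p0] := eqVneq p 0; first by rewrite deriv0 size_poly0.
by have := lt_size_deriv p0; lia.
Qed.

Lemma sz_mul (a b : {poly R}) : (size (a * b)%R <= (size a + size b).-1)%N /\ (size b = 0%N -> size (a * b)%R = 0%N).
Proof.
split; first exact: size_polyMleq.
by move/eqP; rewrite size_poly_eq0 => /eqP ->; rewrite mulr0 size_poly0.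
Qed.

Lemma ohyama_lhs_neq0 (n : int) (p : {poly R}) : p != 0 -> ohyama_lhs n p != 0.
Proof.
move=> p0; rewrite /ohyama_lhs.
set A := ('X + _) * _.
set B := 2%:R%:P * 'X * p * p^`(2).
set C := 2%:R%:P * 'X * p^`() ^+ 2.
set D := 2%:R%:P * p * p^`().
have -> : A - B + C - D = A + (C - B - D) by rewrite /A; ring.
have d1 : (1 <= size p)%N by rewrite size_poly_gt0.
have hp2 : size (p ^+ 2) = ((2 * size p)%N).-1.
  have e := size_exp p 2.
  have nz : (0 < size (p ^+ 2))%N by rewrite size_poly_gt0 expf_neq0.
  move: e nz; set k := size (p ^+ 2); move=> e nz; set d := size p in e d1 *; lia.
have hA : size A = (2 * size p)%N.
  rewrite /A size_mul ?size_XaddC ?hp2 ?expf_neq0 //; first lia.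
  by rewrite -size_poly_gt0 size_XaddC.
have h1 := size_deriv_le p.
have h2 := size_deriv_le p^`().
have hc := size_polyC_leq1 (2%:R : R).
have hX := size_polyX R.
rewrite derivSn derivn1 in B *.
have hB : (size B <= ((2 * size p)%N).-2)%N.
  have := sz_mul (2%:R%:P * 'X * p) p^`()^`().
  have := sz_mul (2%:R%:P * 'X) p.
  have := sz_mul (2%:R%:P) 'X.
  rewrite -/B.
  set a1 := size (2%:R%:P * 'X); set a2 := size (2%:R%:P * 'X * p).
  set a0 := size (2%:R%:P : {poly R}) in hc *; set x := size 'X in hX *.
  set d := size p in h1 h2 d1 *; set e1 := size p^`() in h1 h2 *.
  set e2 := size p^`()^`() in h2 *.
  lia.
have hC : (size C <= ((2 * size p)%N).-2)%N.
  have := sz_mul (2%:R%:P * 'X) (p^`() ^+ 2).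
  have := sz_mul p^`() p^`().
  have := sz_mul (2%:R%:P) 'X.
  rewrite -/C expr2.
  set a1 := size (2%:R%:P * 'X); set a2 := size (p^`() * p^`()).
  set a0 := size (2%:R%:P : {poly R}) in hc *; set x := size 'X in hX *.
  set d := size p in h1 h2 d1 *; set e1 := size p^`() in h1 h2 *.
  lia.
have hD : (size D <= ((2 * size p)%N).-2)%N.
  have := sz_mul (2%:R%:P * p) p^`().
  have := sz_mul (2%:R%:P) p.
  rewrite -/D.
  set a1 := size (2%:R%:P * p).
  set a0 := size (2%:R%:P : {poly R}) in hc *.
  set d := size p in h1 h2 d1 *; set e1 := size p^`() in h1 h2 *.
  lia.
move: hB hC hD; rewrite -size_poly_gt0.
set d := size p in d1 hA *; move=> hB hC hD.
rewrite size_polyDl; first by rewrite hA; lia.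
rewrite hA; apply: (leq_ltn_trans (size_polyD _ _)).
rewrite gtn_max size_polyN.
apply/andP; split; last by set sD := size D in hD *; lia.
apply: (leq_ltn_trans (size_polyD _ _)).
rewrite gtn_max size_polyN.
apply/andP; split; first by set sD := size C in hC *; lia.
by set sD := size B in hB *; lia.
Qed.

Definition Zf (y : R) : R := powR (y / 2) (3^-1).

Lemma near_pos t : 0 < t -> \forall y \near t, 0 < y.
Proof.
exact: lt_nbhsr. Qed.

Lemma Zf_gt0 {y} : 0 < y -> 0 < Zf y.
Proof. by move=> y0; rewrite /Zf powR_gt0 // divr_gt0. Qed.

Lemma Zf3 {y} : 0 < y -> Zf y ^+ 3 = y / 2.
Proof.
move=> y0; rewrite /Zf -powR_mulrn ?powR_ge0 // -powRrM mulVf ?powRr1 //.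
all: try by rewrite ltW // divr_gt0.
all: try by rewrite pnatr_eq0.
Qed.

Lemma is_derive_Zf {y} : 0 < y -> is_derive y 1 Zf ((6 * Zf y ^+ 2)^-1).
Proof.
move=> y0.
have h2 : is_derive y (1:R) (fun x : R => x / 2) (2^-1).
  have h : is_derive y (1:R) (horner ('X * (2^-1)%:P)) ('X * (2^-1)%:P)^`().[y]
    := is_derive_poly ('X * (2^-1)%:P) y.
  apply: is_derive_ext; first by move=> x; rewrite hornerM hornerX hornerC.
  by rewrite !poly.derivE !hornerE.
have hp := @is_derive1_powR R (3^-1) (y / 2) (divr_gt0 y0 (ltr0Sn _ 1)).
have hc := is_derive1_comp (g := fun x : R => x / 2) (x := y) hp h2.
apply: is_derive_ext; first by [].
have hz := Zf_gt0 y0; have h3 := Zf3 y0.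
rewrite powRB ?powRr1 ?(ltW (divr_gt0 y0 (ltr0Sn _ 1))) //; last first.
  by apply/implyP => _; rewrite gt_eqF // divr_gt0.
rewrite -/(Zf y) -h3; field.
by rewrite gt_eqF.
Qed.

Definition E (f f1 f2 : R -> R) t := t * (f1 t ^+ 2 - f t * f2 t) - f t * f1 t.
Definition good (f f1 f2 : R -> R) :=
  forall t, 0 < t -> is_derive t 1 f (f1 t) /\ is_derive t 1 f1 (f2 t).

Lemma good_mul u u1 u2 v v1 v2 : good u u1 u2 -> good v v1 v2 ->
  good (fun t => u t * v t) (fun t => u1 t * v t + u t * v1 t)
       (fun t => u2 t * v t + 2 * (u1 t * v1 t) + u t * v2 t).
Proof.
move=> gu gv t t0; have [du du1] := gu t t0; have [dv dv1] := gv t t0; split.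
  have h := is_deriveM du dv.
  apply: is_derive_ext; first by [].
  by rewrite /GRing.scale /=; ring.
have h := is_deriveD (is_deriveM du1 dv) (is_deriveM du dv1).
apply: is_derive_ext; first by [].
by rewrite /GRing.scale /=; ring.
Qed.

Lemma E_mul u u1 u2 v v1 v2 t :
  E (fun t => u t * v t) (fun t => u1 t * v t + u t * v1 t)
       (fun t => u2 t * v t + 2 * (u1 t * v1 t) + u t * v2 t) t =
  v t ^+ 2 * E u u1 u2 t + u t ^+ 2 * E v v1 v2 t.
Proof. rewrite /E; ring. Qed.

Lemma good_cst k : good (fun=> k) (fun=> 0) (fun=> 0).
Proof. by move=> t _; split; apply: is_derive_cst. Qed.

Lemma good_poly (p : {poly R}) : good (horner p) (horner p^`()) (horner p^`()^`()).
Proof. by move=> t _; split; apply: is_derive_poly. Qed.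

Lemma good_pow a : good (fun t => powR t a) (fun t => a * powR t (a - 1))
   (fun t => a * ((a - 1) * powR t (a - 1 - 1))).
Proof.
move=> t t0; split.
  have h := is_derive1_powR a t0.
  by apply: is_derive_ext; first by [].
have h := is_deriveM (is_derive_cst a t 1) (is_derive1_powR (a - 1) t0).
apply: is_derive_ext; first by [].
by rewrite /GRing.scale /=; ring.
Qed.

Lemma good_exp (Q : {poly R}) : good (fun t => expR Q.[t])
  (fun t => Q^`().[t] * expR Q.[t])
  (fun t => Q^`()^`().[t] * expR Q.[t] + Q^`().[t] * (Q^`().[t] * expR Q.[t])).
Proof.
have d1 t : is_derive t 1 (fun t => expR Q.[t]) (Q^`().[t] * expR Q.[t]).
  have h := is_derive1_comp (is_derive_expR Q.[t]) (is_derive_poly Q t).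
  apply: is_derive_ext; first by [].
  by rewrite mulrC.
move=> t t0; split; first exact: d1.
have h := is_deriveM (is_derive_poly Q^`() t) (d1 t).
apply: is_derive_ext; first by [].
by rewrite /GRing.scale /=; ring.
Qed.

Lemma good_ext f g f1 f2 : (forall t, 0 < t -> f t = g t) -> good f f1 f2 -> good g f1 f2.
Proof.
move=> fg gf t t0; have [h1 h2] := gf t t0; split => //.
apply: near_eq_is_derive h1.
near=> y; rewrite fg //; near: y; exact: near_pos.
Unshelve. all: by end_near. Qed.


Lemma chain (f h h1 h2 : R -> R) y : good h h1 h2 ->
  (forall x : R, 0 < x -> f x = h (Zf x)) -> 0 < y ->
  [/\ derivable f y 1, derivable (derive1 f) y 1, {for y, continuous f} &
   y * ((derive1 f) y ^+ 2 - f y * (derive1 (derive1 f)) y) - f y * (derive1 f) y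
     = E h h1 h2 (Zf y) / (18 * Zf y ^+ 2)].
Proof.
move=> gh fh y0.
have df (x : R) : 0 < x -> is_derive x 1 f (h1 (Zf x) * (6 * Zf x ^+ 2)^-1).
  move=> x0; have [hd _] := gh _ (Zf_gt0 x0).
  have hc := is_derive1_comp (g := Zf) (x := x) hd (is_derive_Zf x0).
  apply: near_eq_is_derive hc.
  near=> z; rewrite /= fh //; near: z; exact: near_pos.
pose g1 (x : R) := h1 (Zf x) * (6 * Zf x ^+ 2)^-1.
have e1 (x : R) : 0 < x -> (derive1 f) x = g1 x.
  by move=> x0; have H := df x x0; rewrite derive1E derive_val.
have dk (t : R) : 0 < t -> is_derive t 1 (fun t => (6 * t ^+ 2)^-1)
                       (- (6 * t ^+ 2) ^- 2 * (12 * t)).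
  move=> t0.
  have hp : is_derive t (1:R) (horner (6%:P * 'X^2)) (6%:P * 'X^2)^`().[t]
    := is_derive_poly _ t.
  have hq : is_derive t (1:R) (fun t => 6 * t ^+ 2) (12 * t).
    apply: is_derive_ext; first by move=> x; rewrite hornerM hornerC hornerXn.
    by rewrite !poly.derivE !hornerE; ring.
  have nz : 6 * t ^+ 2 != 0.
    by rewrite mulf_neq0 // ?pnatr_eq0 // expf_neq0 // gt_eqF.
  have H := is_deriveV (x := t) (f := fun t => 6 * t ^+ 2) nz hq.
  apply: is_derive_ext; first by [].
  by rewrite /GRing.scale /=.
have dH (t : R) : 0 < t -> is_derive t 1 (fun t => h1 t * (6 * t ^+ 2)^-1)
    (h2 t * (6 * t ^+ 2)^-1 + h1 t * (- (6 * t ^+ 2) ^- 2 * (12 * t))).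
  move=> t0; have [_ d2] := gh t t0.
  have hh := is_deriveM d2 (dk t t0).
  apply: is_derive_ext; first by [].
  by rewrite /GRing.scale /=; ring.
set z := Zf y.
have z0 : 0 < z := Zf_gt0 y0.
have dg1 : is_derive y 1 g1
    ((h2 z * (6 * z ^+ 2)^-1 + h1 z * (- (6 * z ^+ 2) ^- 2 * (12 * z)))
     * (6 * z ^+ 2)^-1).
  have hc := is_derive1_comp (g := Zf) (x := y) (dH _ z0) (is_derive_Zf y0).
  by apply: is_derive_ext; first by [].
have ng : \forall x \near y, g1 x = (derive1 f) x.
  near=> x; rewrite e1 //; near: x; exact: near_pos.
have e2 : (derive1 (derive1 f)) y = (h2 z * (6 * z ^+ 2)^-1
     + h1 z * (- (6 * z ^+ 2) ^- 2 * (12 * z))) * (6 * z ^+ 2)^-1.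
  rewrite derive1E -(near_eq_derive _ ng).
  by rewrite derive_val.
have dfy := df y y0.
split.
- exact: ex_derive.
- by apply: near_eq_derivable ng _; apply: ex_derive.
- by apply/differentiable_continuous/derivable1_diffP; apply: ex_derive.
rewrite e2 e1 // fh // /g1 -/z.
have hy : y = 2 * z ^+ 3 by rewrite Zf3 //; field.
rewrite [in X in X * _ - _]hy /E.
field; by rewrite gt_eqF.
Unshelve. all: by end_near. Qed.

Lemma density (f g phi : R -> R) (W : {poly R}) y : W != 0 -> 0 < y ->
  {for y, continuous f} -> {for y, continuous g} -> {for y, continuous phi} ->
  (forall x : R, 0 < x -> phi x = phi y -> x = y) ->
  (forall x : R, 0 < x -> W.[phi x] != 0 -> f x = g x) -> f y = g y.
Proof.
move=> W0 y0 cf cg cp inj fg.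
have [m [r rn Wr]] := multiplicity_XsubC W (phi y).
move: rn; rewrite W0 /= => rn.
have cr : {for y, continuous (fun x => r.[phi x])}.
  have hh := continuous_comp cp (@continuous_horner R r (phi y)); exact hh.
have nr : \forall x \near y, r.[phi x] != 0.
  by apply: (cvgr_neq0 _ cr rn).
have nw' : \forall x \near y, x != y -> f x = g x.
  near=> x => xy; apply: fg; first by near: x; exact: near_pos.
  rewrite Wr hornerM mulf_neq0 //; first by near: x; exact: nr.
  rewrite horner_exp !hornerE expf_neq0 // subr_eq0.
  apply/eqP => /inj; have xpos : 0 < x by near: x; exact: near_pos.
  by move=> /(_ xpos) /eqP; rewrite (negbTE xy).
have nw : \forall x \near (dnbhs y), f x = g x := nw'.
have cf' := (continuous_withinNx f y).1 cf.
have cg' := (continuous_withinNx g y).1 cg.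
have H : (g @ dnbhs y --> f y)%classic.
  apply: cvg_trans _ cf'; apply: near_eq_cvg; exact: nw.
exact: (cvg_unique (@norm_hausdorff _ _) H cg').
Unshelve. all: by end_near. Qed.

Definition trip := ((R -> R) * (R -> R) * (R -> R))%type.
Definition tmul (A B : trip) : trip :=
  (fun t => A.1.1 t * B.1.1 t, fun t => A.1.2 t * B.1.1 t + A.1.1 t * B.1.2 t,
   fun t => A.2 t * B.1.1 t + 2 * (A.1.2 t * B.1.2 t) + A.1.1 t * B.2 t).
Definition ET (A : trip) := E A.1.1 A.1.2 A.2.
Definition Tc (k : R) : trip := (fun=> k, fun=> 0, fun=> 0).
Definition Tpow (a : R) : trip := (fun t => powR t a, fun t => a * powR t (a - 1),
   fun t => a * ((a - 1) * powR t (a - 1 - 1))).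
Definition Texp (Q : {poly R}) : trip := (fun t => expR Q.[t],
  fun t => Q^`().[t] * expR Q.[t],
  fun t => Q^`()^`().[t] * expR Q.[t] + Q^`().[t] * (Q^`().[t] * expR Q.[t])).
Definition Tpoly (p : {poly R}) : trip := (horner p, horner p^`(), horner p^`()^`()).

Lemma ET_mul A B t : ET (tmul A B) t = B.1.1 t ^+ 2 * ET A t + A.1.1 t ^+ 2 * ET B t.
Proof. rewrite /ET /E /=; ring. Qed.
Lemma ET_cst k t : ET (Tc k) t = 0.
Proof. rewrite /ET /E /=; ring. Qed.
Lemma ET_pow a t : 0 < t -> ET (Tpow a) t = 0.
Proof.
move=> t0; rewrite /ET /E /=.
have t1 : t != 0 by rewrite gt_eqF.
have e1 : forall b, powR t (b - 1) = powR t b / t.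
  by move=> b; rewrite powRB ?powRr1 ?ltW //; apply/implyP.
by rewrite !e1; field.
Qed.
Lemma ET_exp Q t : ET (Texp Q) t = - expR Q.[t] ^+ 2 * (t * Q^`()^`().[t] + Q^`().[t]).
Proof. rewrite /ET /E /=; ring. Qed.

Definition Sp : {poly R} := (3:R)%:P * 'X^2.
Definition Qn (n : int) : {poly R} := (- (9 / 8))%:P * 'X^4 - ((3 / 2) * n%:~R)%:P * 'X^2.

Lemma Sp_h t : Sp.[t] = 3 * t ^+ 2.
Proof. by rewrite /Sp !hornerE. Qed.

Lemma Sp1 t : Sp^`().[t] = 6 * t.
Proof. rewrite /Sp !poly.derivE !hornerE; ring. Qed.
Lemma Sp2 t : Sp^`()^`().[t] = 6.
Proof. rewrite /Sp !poly.derivE !hornerE; ring. Qed.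

Lemma ET_W (p : {poly R}) t : ET (Tpoly (p \Po Sp)) t =
  6 * t * (2 * (3 * t ^+ 2) * (p^`().[3 * t ^+ 2] ^+ 2 - p.[3 * t ^+ 2] * p^`()^`().[3 * t ^+ 2])
           - 2 * p.[3 * t ^+ 2] * p^`().[3 * t ^+ 2]).
Proof.
rewrite /ET /E /= !poly.deriv_comp (poly.derivM (p^`() \Po Sp)) poly.deriv_comp.
rewrite !hornerD !hornerM !horner_comp !Sp_h Sp1 Sp2.
ring.
Qed.

Lemma Qn_d n t : t * (Qn n)^`()^`().[t] + (Qn n)^`().[t] = - (18 * t ^+ 3 + 6 * n%:~R * t).
Proof. rewrite /Qn !poly.derivE. rewrite !(hornerD, hornerN, hornerM, hornerC, hornerX, hornerXn, hornerMn). by field. Qed.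

Definition goodT (A : trip) := good A.1.1 A.1.2 A.2.
Lemma goodT_mul A B : goodT A -> goodT B -> goodT (tmul A B).
Proof. by case: A => [[u u1] u2]; case: B => [[v v1] v2]; exact: good_mul. Qed.

Definition Kc (n : int) : R := if int_odd n then powR 3 (4^-1) else 1.
Definition an (n : int) : R := if int_odd n then 7 / 24 else - (5 / 24).
Definition TH (rho : int -> {poly R}) n :=
  tmul (tmul (tmul (Tc (Kc n)) (Tpow (an n))) (Texp (Qn n))) (Tpoly (rho n \Po Sp)).
Definition hfun (rho : int -> {poly R}) (n : int) (t : R) : R :=
  if int_odd n then
    powR 3 (4^-1) * powR t (7 / 24)
    * expR (- (9 / 8) * t ^+ 4 - (3 / 2) * n%:~R * t ^+ 2)
    * (rho n).[3 * t ^+ 2]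
  else
    powR t (- (5 / 24))
    * expR (- (9 / 8) * t ^+ 4 - (3 / 2) * n%:~R * t ^+ 2)
    * (rho n).[3 * t ^+ 2].

Lemma Qn_h n t : (Qn n).[t] = - (9 / 8) * t ^+ 4 - (3 / 2) * n%:~R * t ^+ 2.
Proof. by rewrite /Qn !(hornerD, hornerN, hornerM, hornerC, hornerX, hornerXn). Qed.

Lemma TH_h rho n t : (TH rho n).1.1 t = hfun rho n t.
Proof.
rewrite /TH /hfun /Kc /an /= horner_comp Sp_h Qn_h.
by case: int_odd; rewrite ?mul1r.
Qed.

Lemma goodTH rho n : goodT (TH rho n).
Proof.
apply: goodT_mul; last exact: good_poly.
apply: goodT_mul; last exact: good_exp.
apply: goodT_mul; last exact: good_pow.
exact: good_cst.
Qed.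

Lemma int_oddS (n : int) : int_odd (n + 1) = ~~ int_odd n.
Proof. rewrite /int_odd; lia. Qed.
Lemma int_oddP (n : int) : int_odd (n - 1) = ~~ int_odd n.
Proof. rewrite /int_odd; lia. Qed.

Lemma hexp n t : expR (- (9 / 8) * t ^+ 4 - (3 / 2) * (n + 1)%:~R * t ^+ 2)
  * expR (- (9 / 8) * t ^+ 4 - (3 / 2) * (n - 1)%:~R * t ^+ 2) = expR (Qn n).[t] ^+ 2.
Proof.
rewrite -expRD [RHS]expr2 -expRD Qn_h; congr expR.
rewrite rmorphD rmorphB /=; by field.
Qed.

Lemma hPow t : 0 < t -> powR t (7 / 24) ^+ 2 = t * powR t (- (5 / 24)) ^+ 2.
Proof.
move=> t0; rewrite -!powR_mulrn ?powR_ge0 // -!powRrM.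
rewrite -{2}(powRr1 (ltW t0)) -powRD; last by apply/implyP => _; rewrite gt_eqF.
by congr powR; field.
Qed.

Lemma hc3 : powR 3 (4^-1) ^+ 2 = Num.sqrt (3 : R).
Proof.
rewrite -powR_mulrn ?powR_ge0 // -powRrM -powR12_sqrt //.
by congr powR; field.
Qed.

Lemma alg_odd (t c sq Po Pe e ep em rp rm : R) : 0 < t -> c ^+ 2 = sq -> sq ^+ 2 = 3 ->
  Po ^+ 2 = t * Pe ^+ 2 -> ep * em = e ^+ 2 -> ep != 0 ->
  sq * (c ^+ 2 * Po ^+ 2 * e ^+ 2 * (6 * t * (rp * rm)) / (18 * t ^+ 2))
  = Pe * ep * rp * (Pe * em * rm).
Proof.
move=> t0 hc hs hP he ep0.
have em' : em = e ^+ 2 / ep by rewrite -he; field.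
have h18 : (18 : R) = 6 * sq ^+ 2 by rewrite hs; field.
have sq0 : sq != 0 by apply/eqP => sq0; move: hs; rewrite sq0 expr0n /=; apply/eqP; rewrite eq_sym pnatr_eq0.
rewrite em' hc hP h18; field.
by rewrite ep0 sq0 gt_eqF.
Qed.

Lemma alg_even (t c sq Po Pe e ep em rp rm : R) : 0 < t -> c ^+ 2 = sq ->
  Po ^+ 2 = t * Pe ^+ 2 -> ep * em = e ^+ 2 -> ep != 0 ->
  sq * (1 ^+ 2 * Pe ^+ 2 * e ^+ 2 * (6 * t * (3 * t ^+ 2 * (rp * rm))) / (18 * t ^+ 2))
  = c * Po * ep * rp * (c * Po * em * rm).
Proof.
move=> t0 hc hP he ep0.
have em' : em = e ^+ 2 / ep by rewrite -he; field.
have hP' : Pe ^+ 2 = Po ^+ 2 / t by rewrite hP; field; rewrite gt_eqF.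
rewrite em' hP' -hc; field.
by rewrite ep0 gt_eqF.
Qed.

Lemma key rho n t :
  ohyama_lhs n (rho n) = (if int_odd n then rho (n + 1) * rho (n - 1)
                          else 'X * (rho (n + 1) * rho (n - 1))) -> 0 < t ->
  Num.sqrt 3 * (ET (TH rho n) t / (18 * t ^+ 2)) = hfun rho (n + 1) t * hfun rho (n - 1) t.
Proof.
move=> rec t0.
have ETe : ET (TH rho n) t = Kc n ^+ 2 * powR t (an n) ^+ 2 * expR (Qn n).[t] ^+ 2
    * (6 * t * (ohyama_lhs n (rho n)).[3 * t ^+ 2]).
  rewrite /TH !ET_mul ET_cst ET_pow // ET_exp Qn_d ET_W /= horner_comp Sp_h.
  rewrite /ohyama_lhs !(hornerD, hornerN, hornerM, hornerC, hornerX, horner_exp).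
  rewrite derivSn derivn1.
  by field.
rewrite ETe rec /hfun int_oddS int_oddP /Kc /an.
have ep0 : expR (- (9 / 8) * t ^+ 4 - (3 / 2) * (n + 1)%:~R * t ^+ 2) != 0.
  by rewrite gt_eqF // expR_gt0.
case: (int_odd n) => /=.
- rewrite hornerM; apply: alg_odd => //.
  + exact: hc3.
  + by rewrite sqr_sqrtr.
  + exact: hPow.
  + exact: hexp.
- rewrite hornerM hornerM hornerX; apply: alg_even => //.
  + exact: hc3.
  + exact: hPow.
  + exact: hexp.
Qed.

Lemma rho_neq0 (rho : int -> {poly R}) : is_ohyama rho -> forall n, rho n != 0.
Proof.
case=> r0 r1 rm rec.
have step n : rho n != 0 -> rho (n + 1) != 0 /\ rho (n - 1) != 0.
  move=> nz; have := @ohyama_lhs_neq0 n _ nz; rewrite rec.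
  case: int_odd; rewrite !mulf_eq0 !negb_or.
    by case/andP=> -> ->.
  by case/and3P=> _ -> ->.
have pos (k : nat) : rho k%:Z != 0 /\ rho (- k%:Z) != 0.
  elim: k => [|k [ih1 ih2]]; first by rewrite oppr0 r0 oner_neq0.
  split.
    have -> : (k.+1)%:Z = k%:Z + 1 by lia.
    exact: (step _ ih1).1.
  have -> : - (k.+1)%:Z = - k%:Z - 1 by lia.
  exact: (step _ ih2).2.
by case=> k; [exact: (pos k).1 | rewrite NegzE; exact: (pos k.+1).2].
Qed.

Lemma Zf_cont {y} : 0 < y -> {for y, continuous Zf}.
Proof.
move=> y0; have H := is_derive_Zf y0.
by apply/differentiable_continuous/derivable1_diffP; apply: ex_derive.
Qed.

Lemma hfun_neq0 rho n t : 0 < t -> (rho n).[3 * t ^+ 2] != 0 -> hfun rho n t != 0.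
Proof.
move=> t0 nz; rewrite /hfun; case: int_odd;
  by rewrite !mulf_neq0 // gt_eqF // ?powR_gt0 ?expR_gt0.
Qed.

Lemma main_aux (rho : int -> {poly R}) (sigma : int -> R -> R) :
  is_ohyama rho ->
  (forall n : int, forall z : R, 0 < z ->
     [/\ derivable (sigma n) z 1,
         derivable (derive1 (sigma n)) z 1 &
         sigma (n + 1) z * sigma (n - 1) z =
           Num.sqrt 3 *
           (z * ((derive1 (sigma n) z) ^+ 2
                 - sigma n z * derive1 (derive1 (sigma n)) z)
            - sigma n z * derive1 (sigma n) z)]) ->
  (forall z : R, 0 < z -> sigma 0 z = hfun rho 0 (Zf z)) ->
  (forall z : R, 0 < z -> sigma 1 z = hfun rho 1 (Zf z)) ->
  forall (n : int) (z : R), 0 < z -> sigma n z = hfun rho n (Zf z).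
Proof.
move=> hO hsig P0 P1.
have rn := @rho_neq0 rho hO.
case: hO => r0 r1 rm rec.
pose P n := forall z : R, 0 < z -> sigma n z = hfun rho n (Zf z).
have step n m o : (m = n + 1 /\ o = n - 1) \/ (m = n - 1 /\ o = n + 1) ->
    P n -> P o -> P m.
  move=> hmo Pn Po z z0.
  have hprod y : 0 < y -> sigma m y * sigma o y = hfun rho m (Zf y) * hfun rho o (Zf y).
    move=> y0.
    have fh : forall x : R, 0 < x -> sigma n x = (TH rho n).1.1 (Zf x).
      by move=> x x0; rewrite TH_h; exact: Pn.
    have [_ _ _ ch] := @chain (sigma n) _ _ _ y (goodTH rho n) fh y0.
    have [_ _ eq] := hsig n y y0.
    have k := @key rho n (Zf y) (rec n) (Zf_gt0 y0).
    have e : sigma (n + 1) y * sigma (n - 1) y = hfun rho (n + 1) (Zf y) * hfun rho (n - 1) (Zf y).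
      by rewrite eq ch k.
    case: hmo => [[-> ->] | [-> ->]] //.
    by rewrite mulrC e mulrC.
  have gh : forall x : R, 0 < x -> (fun y => hfun rho m (Zf y)) x = (TH rho m).1.1 (Zf x).
    by move=> x x0; rewrite TH_h.
  have [_ _ cg _] := @chain (fun y => hfun rho m (Zf y)) _ _ _ z (goodTH rho m) gh z0.
  have [dm _ _] := hsig m z z0.
  apply: (@density (sigma m) (fun y => hfun rho m (Zf y)) (fun y => Sp.[Zf y]) (rho o) z).
  - exact: rn.
  - exact: z0.
  - by apply/differentiable_continuous/derivable1_diffP.
  - exact: cg.
  - have hh := continuous_comp (Zf_cont z0) (@continuous_horner R Sp (Zf z)); exact hh.
  - move=> x x0; rewrite !Sp_h => /eqP.
    rewrite (inj_eq (mulfI _)) ?pnatr_eq0 // eqrXn2 // ?ltW ?Zf_gt0 // => /eqP hx.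
    have := Zf3 x0; rewrite hx Zf3 // => /eqP.
    by rewrite (inj_eq (mulIf _)) ?invr_eq0 ?pnatr_eq0 // => /eqP.
  - move=> x x0; rewrite Sp_h => Wn.
    have hx := hprod x x0; rewrite (Po x x0) in hx.
    exact: (mulIf (@hfun_neq0 rho o (Zf x) (Zf_gt0 x0) Wn) hx).
have Peq n n' : P n -> n = n' -> P n' by move=> ? <-.
have Pnat (k : nat) : P k%:Z /\ P (k.+1)%:Z.
  elim: k => [|k [ih1 ih2]]; first by split.
  split => //.
  apply: (step (k.+1)%:Z _ k%:Z _ ih2 ih1).
  by left; split; lia.
have Pneg (k : nat) : P (- k%:Z) /\ P (1 - k%:Z).
  elim: k => [|k [ih1 ih2]].
    by split; [apply: (Peq 0 _ P0) | apply: (Peq 1 _ P1)]; lia.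
  split; last by apply: (Peq _ _ ih1); lia.
  apply: (step (- k%:Z) _ (1 - k%:Z) _ ih1 ih2).
  by right; split; lia.
by case=> k; [exact: (Pnat k).1 | rewrite NegzE; exact: (Pneg k.+1).1].
Qed.

End S.
Arguments hfun {R}.


Theorem mainTheorem7 (R : realType) (rho : int -> {poly R})
  (sigma : int -> R -> R) :
  is_ohyama rho ->
  (forall n : int, forall z : R, 0 < z ->
     [/\ derivable (sigma n) z 1,
         derivable (derive1 (sigma n)) z 1 &
         sigma (n + 1) z * sigma (n - 1) z =
           Num.sqrt 3 *
           (z * ((derive1 (sigma n) z) ^+ 2
                 - sigma n z * derive1 (derive1 (sigma n)) z)
            - sigma n z * derive1 (sigma n) z)]) ->
  (forall z : R, 0 < z ->
     let zeta := powR (z / 2) (3^-1) in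
     sigma 0 z = powR zeta (- (5 / 24)) * expR (- (9 / 8) * zeta ^+ 4)) ->
  (forall z : R, 0 < z ->
     let zeta := powR (z / 2) (3^-1) in
     sigma 1 z = powR 3 (4^-1) * powR zeta (7 / 24)
                 * expR (- (9 / 8) * zeta ^+ 4 - (3 / 2) * zeta ^+ 2)) ->
  forall (n : int) (z : R), 0 < z ->
    let zeta := powR (z / 2) (3^-1) in
    sigma n z =
      if int_odd n then
        powR 3 (4^-1) * powR zeta (7 / 24)
        * expR (- (9 / 8) * zeta ^+ 4 - (3 / 2) * n%:~R * zeta ^+ 2)
        * (rho n).[3 * zeta ^+ 2]
      else
        powR zeta (- (5 / 24))
        * expR (- (9 / 8) * zeta ^+ 4 - (3 / 2) * n%:~R * zeta ^+ 2)
        * (rho n).[3 * zeta ^+ 2].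
Proof.
move=> hO hsig h0 h1 n z z0.
have r0 : rho 0 = 1 by case: hO.
have r1 : rho 1 = 1 by case: hO.
have P0 : forall y : R, 0 < y -> sigma 0 y = hfun rho 0 (Zf R y).
  move=> y y0; rewrite h0 // /hfun /= r0 hornerC mulr1 /Zf.
  congr (_ * expR _); rewrite mulr0 mul0r; by rewrite subr0.
have P1 : forall y : R, 0 < y -> sigma 1 y = hfun rho 1 (Zf R y).
  move=> y y0; rewrite h1 // /hfun /= r1 hornerC mulr1 /Zf.
  by rewrite mulr1.
exact: (@main_aux R rho sigma hO hsig P0 P1 n z z0).
Qed.
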